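(* Let $\sigma$ be a strategy on an arena $A$. If $sm\in\sigma$ and $tn\in\sigma$ (with $m,n$ single move occurrences) and $\mathrm{GR}(s)=\mathrm{GR}(t)$, then there exists an $\mathcal O$-renaming $\varsigma$ such that $sm=(tn)\varsigma$.
   Context: First-order variables are split into three disjoint countable sets: $\mathcal A$-, $\mathcal O$- and $\mathcal P$-variables. $\mathcal{AP}$-terms (resp. $\mathcal{OP}$-terms) are first-order terms built from $\mathcal A$- and $\mathcal P$-variables (resp. $\mathcal O$- and $\mathcal P$-variables). Arena: a finite forest whose nodes (moves) carry a first-order label (a list of $\mathcal A$-variables, all distinct across the arena) and an atomic label (a list of atomic formulas $X\,t_1\dots t_k$ with $\mathcal{AP}$-terms whose $\mathcal A$-variables occur in the first-order label of the node or an ancestor). Polarity is depth parity: even = Opponent (O), odd = Player (P); roots are initial. Justified sequence: finite sequence of move occurrences; each non-initial occurrence has a $\lambda$-pointer to an earlier occurrence of its father; each element of the atomic label of an occurrence has at most one $\mu$-pointer to an element of the atomic label of an earlier occurrence of opposite polarity. Instantiations: each O-move occurrence carries an $\mathcal O$-instantiation (list of $\mathcal O$-variables of the length of its first-order label), each P-move occurrence a $\mathcal P$-instantiation (list of $\mathcal{OP}$-terms of that length); all $\mathcal O$-variables in $\mathcal O$-instantiations distinct. For an occurrence $m$ with instantiation $[t_1..t_k]$ and first-order label $[x_1..x_k]$, $\theta_m=\{x_i\mapsto t_i\}$ if $m$ is initial, else $\theta_n\cup\{x_i\mapsto t_i\}$ with $n$ its $\lambda$-justifier. Play: instantiated justified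 sequence with alternating polarities, no $\mu$-pointers from O-moves, exactly one $\mu$-pointer from each element of the atomic label of each P-move, every $\mu$-pointer from $X\,t_1..t_k$ at $m$ to $Y\,u_1..u_p$ at $n$ satisfying $X=Y$, $k=p$, $t_i\theta_m=u_i\theta_n$, and every $\mathcal O$-variable in a $\mathcal P$-instantiation occurring in an earlier $\mathcal O$-instantiation. An $\mathcal O$-renaming is an injection $\varsigma$ of $\mathcal O$-variables into themselves; $s\varsigma$ replaces each $o$ by $\varsigma(o)$ in all instantiations. Strategy: non-empty set of even-length plays closed under even-length prefixes, deterministic ($sm,sn\in\sigma\Rightarrow sm=sn$, including pointers and instantiations) and uniform (closed under $\mathcal O$-renamings). $\mathrm{GR}(s)$ is the sequence obtained from a play $s$ by erasing all instantiations and all $\mu$-pointers (keeping moves and $\lambda$-pointers). *)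

(* Defs.v *)
From HB Require Import structures.
From mathcomp Require Import all_boot.
Set Implicit Arguments. Unset Strict Implicit. Unset Printing Implicit Defensive.

Inductive var : Type := VA of nat | VO of nat | VP of nat.

Inductive term (F : Type) : Type :=
| Var of var
| App of F & seq (term F).
Arguments Var {F}.

Section Terms.
Variable F : Type.

Fixpoint subst (f : var -> term F) (t : term F) : term F :=
  match t with
  | Var v => f v
  | App g ts => App g (map (subst f) ts)
  end.

Fixpoint occurs (v : var) (t : term F) : Prop :=
  match t with
  | Var w => w = v
  | App _ ts => (fix occl (l : seq (term F)) : Prop :=
                   match l with nil => False | u :: l' => occurs v u \/ occl l' end) ts
  end.

Definition isA (v : var) : Prop := if v is VA _ then True else False.
Definition isO_var (v : var) : Prop := if v is VO _ then True else False.

Definition APterm (t : term F) : Prop := forall v, occurs v t -> ~ isO_var v.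
Definition OPterm (t : term F) : Prop := forall v, occurs v t -> ~ isA v.

(* atomic formula X t1 .. tk : second-order variable X (a nat) and the terms *)
Definition atom := (nat * seq (term F))%type.
End Terms.

(* An arena: finite forest of moves; [depth] is the depth in the forest
   (its consistency with [parent] is part of [arena_wf], which also forces
   acyclicity).  [fol] = first-order label (list of A-variable indices),
   [atl] = atomic label. *)
Record arena (F : Type) := Arena {
  amove : finType;
  parent : amove -> option amove;
  depth : amove -> nat;
  fol : amove -> seq nat;
  atl : amove -> seq (atom F)
}.

Section Games.
Variable F : Type.
Variable A : arena F.
Notation M := (amove A).

Definition ancestor_or_self (a m : M) : Prop :=
  exists n, iter n (fun o => obind (@parent F A) o) (Some m) = Some a.

Definition arena_wf : Prop :=
  (forall m : M, match parent m with
             | None => depth m = 0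
             | Some p => depth m = (depth p).+1
             end)
  /\ (forall m : M, uniq (fol m))
  /\ (forall (m m' : M) x, x \in fol m -> x \in fol m' -> m = m')
  /\ (forall (m : M) k, k < size (atl m) ->
        forall l, l < size (nth (0, [::]) (atl m) k).2 ->
        let t := nth (Var (VA 0)) (nth (0, [::]) (atl m) k).2 l in
        APterm t /\
        forall x, occurs (VA x) t -> exists a, ancestor_or_self a m /\ x \in fol a).

Definition isOm (m : M) : bool := ~~ odd (depth m).
Definition isPm (m : M) : bool := odd (depth m).

(* A move occurrence: the move, its lambda-pointer (absolute index of an
   earlier occurrence), one optional mu-pointer per element of the atomic
   label (pair: index of occurrence, index in its atomic label), and its
   instantiation. *)
Record occ := Occ {
  o_mv : M;
  o_jp : option nat;
  o_mu : seq (option (nat * nat));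
  o_inst : seq (term F)
}.

Definition dterm : term F := Var (VA 0).
Definition datom : atom F := (0, [::]).

Definition justified (s : seq occ) : Prop :=
  forall i e, onth s i = Some e ->
    (match parent (o_mv e) with
     | None => o_jp e = None
     | Some p => exists j e', o_jp e = Some j /\ j < i /\ onth s j = Some e' /\ o_mv e' = p
     end)
    /\ size (o_mu e) = size (atl (o_mv e))
    /\ (forall k j l, nth None (o_mu e) k = Some (j, l) ->
          exists e', j < i /\ onth s j = Some e' /\ l < size (atl (o_mv e'))
                     /\ isOm (o_mv e') != isOm (o_mv e)).

Definition instantiated (s : seq occ) : Prop :=
  (forall i e, onth s i = Some e ->
     size (o_inst e) = size (fol (o_mv e))
     /\ (isOm (o_mv e) -> forall k, k < size (o_inst e) ->
           exists o, nth dterm (o_inst e) k = Var (VO o))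
     /\ (isPm (o_mv e) -> forall k, k < size (o_inst e) -> OPterm (nth dterm (o_inst e) k)))
  /\ (forall i j e e' k l o,
        onth s i = Some e -> onth s j = Some e' -> isOm (o_mv e) -> isOm (o_mv e') ->
        k < size (o_inst e) -> l < size (o_inst e') ->
        nth dterm (o_inst e) k = Var (VO o) -> nth dterm (o_inst e') l = Var (VO o) ->
        i = j /\ k = l).

Fixpoint theta (fuel : nat) (s : seq occ) (i : nat) (x : nat) : term F :=
  match fuel with
  | 0 => Var (VA x)
  | fuel'.+1 =>
    match onth s i with
    | None => Var (VA x)
    | Some e =>
      if x \in fol (o_mv e) then nth (Var (VA x)) (o_inst e) (index x (fol (o_mv e)))
      else match o_jp e with
           | Some j => theta fuel' s j x
           | None => Var (VA x)
           end
    end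
  end.

Definition theta_at (s : seq occ) (i : nat) : var -> term F :=
  fun v => match v with VA x => theta i.+1 s i x | _ => Var v end.

Definition play (s : seq occ) : Prop :=
  justified s /\ instantiated s
  /\ (forall i e e', onth s i = Some e -> onth s i.+1 = Some e' ->
        isOm (o_mv e) != isOm (o_mv e'))
  /\ (forall i e, onth s i = Some e -> isOm (o_mv e) ->
        forall k, nth None (o_mu e) k = None)
  /\ (forall i e, onth s i = Some e -> isPm (o_mv e) ->
        forall k, k < size (o_mu e) -> nth None (o_mu e) k <> None)
  /\ (forall i e k j l e', onth s i = Some e -> nth None (o_mu e) k = Some (j, l) ->
        onth s j = Some e' ->
        (nth datom (atl (o_mv e)) k).1 = (nth datom (atl (o_mv e')) l).1
        /\ map (subst (theta_at s i)) (nth datom (atl (o_mv e)) k).2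
           = map (subst (theta_at s j)) (nth datom (atl (o_mv e')) l).2)
  /\ (forall i e k o, onth s i = Some e -> isPm (o_mv e) -> k < size (o_inst e) ->
        occurs (VO o) (nth dterm (o_inst e) k) ->
        exists j e' l, j < i /\ onth s j = Some e' /\ isOm (o_mv e')
                       /\ l < size (o_inst e') /\ nth dterm (o_inst e') l = Var (VO o)).

Definition rename_term (r : nat -> nat) : term F -> term F :=
  subst (fun v => match v with VO o => Var (VO (r o)) | _ => Var v end).

Definition rename_occ (r : nat -> nat) (e : occ) : occ :=
  Occ (o_mv e) (o_jp e) (o_mu e) (map (rename_term r) (o_inst e)).

Definition rename (r : nat -> nat) (s : seq occ) : seq occ := map (rename_occ r) s.

Definition GR (s : seq occ) : seq (M * option nat) :=
  map (fun e => (o_mv e, o_jp e)) s.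

Definition strategy (sigma : seq occ -> Prop) : Prop :=
  (exists s, sigma s)
  /\ (forall s, sigma s -> play s /\ ~~ odd (size s))
  /\ (forall s k, sigma s -> ~~ odd k -> k <= size s -> sigma (take k s))
  /\ (forall s a b, sigma (rcons s a) -> sigma (rcons s b) -> a = b)
  /\ (forall s (r : nat -> nat), injective r -> sigma s -> sigma (rename r s)).

End Games.

(* Main.v *)
Require Import Defs.
From mathcomp Require Import all_boot.
Set Implicit Arguments. Unset Strict Implicit. Unset Printing Implicit Defensive.

Section Helpers.
Variables (F : Type) (A : arena F).

Lemma onth_nthS (d : occ A) (s : seq (occ A)) i :
  i < size s -> onth s i = Some (nth d s i).
Proof. by move=> h; rewrite onthE (nth_map d). Qed.

Lemma pol (hA : arena_wf A) (S : seq (occ A)) d : play S ->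
  forall i, i < size S -> isOm (o_mv (nth d S i)) = ~~ odd i.
Proof.
move=> [hj [_ [halt _]]]; elim=> [|i IH] hi.
- have [h _] := hj 0 _ (onth_nthS d hi).
  have [hd _] := hA; have := hd (o_mv (nth d S 0)).
  move: h; case: (parent _) => [p|] /=.
  + by move=> [j [e' [_ [+ _]]]]; rewrite ltn0.
  + by move=> _ h0; rewrite /isOm h0.
- have := halt i _ _ (onth_nthS d (ltnW hi)) (onth_nthS d hi).
  rewrite IH ?(ltnW hi) //= .
  by case: (isOm _); case: (odd i).
Qed.

Definition ovar (u : term F) := if u is Var (VO o) then o else 0.

Definition pairs (d : occ A) (S T : seq (occ A)) (len : nat) : seq (nat * nat) :=
  flatten [seq [seq (ovar (nth (dterm F) (o_inst (nth d T i)) k),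
                     ovar (nth (dterm F) (o_inst (nth d S i)) k))
               | k <- iota 0 (size (o_inst (nth d T i)))]
          | i <- [seq i <- iota 0 len | isOm (o_mv (nth d T i))]].

Lemma pairsP d S T len x y : (x, y) \in pairs d S T len <->
  exists i k, [/\ i < len, isOm (o_mv (nth d T i)), k < size (o_inst (nth d T i)),
     x = ovar (nth (dterm F) (o_inst (nth d T i)) k) &
     y = ovar (nth (dterm F) (o_inst (nth d S i)) k)].
Proof.
split.
- case/flatten_mapP => i; rewrite mem_filter mem_iota /= => /andP[hO hi].
  case/mapP => k; rewrite mem_iota /= => hk [-> ->].
  by exists i, k.
- move=> [i [k [hi hO hk -> ->]]].
  apply/flatten_mapP; exists i; first by rewrite mem_filter mem_iota hO.
  by apply/mapP; exists k; rewrite // mem_iota.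
Qed.
End Helpers.

Definition rmap (P : seq (nat * nat)) (z : nat) : nat :=
  if [seq p <- P | p.1 == z] is p :: _ then p.2 else (sumn (unzip2 P)).+1 + z.

Lemma sumn_ge y l : y \in l -> y <= sumn l.
Proof.
elim: l => [|a l IH] //=; rewrite in_cons => /orP[/eqP->|h]; first exact: leq_addr.
exact: leq_trans (IH h) (leq_addl _ _).
Qed.

Lemma rmap_spec P :
  (forall x y x' y', (x, y) \in P -> (x', y') \in P -> (x == x') = (y == y')) ->
  injective (rmap P) /\ forall x y, (x, y) \in P -> rmap P x = y.
Proof.
move=> hP.
have memf z p l : [seq p <- P | p.1 == z] = p :: l -> p \in P /\ p.1 = z.
  move=> E; have : p \in [seq p <- P | p.1 == z] by rewrite E mem_head.
  by rewrite mem_filter => /andP[/eqP-> ->].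
have big z p l : [seq p <- P | p.1 == z] = p :: l -> p.2 < (sumn (unzip2 P)).+1.
  move=> /memf[hp _]; rewrite ltnS; apply: sumn_ge.
  by apply/mapP; exists p.
split.
- move=> z z'; rewrite /rmap.
  case E1: [seq p <- P | p.1 == z] => [|p l]; case E2: [seq p <- P | p.1 == z'] => [|p' l'].
  + exact: addnI.
  + move=> h; have := big _ _ _ E2; rewrite -h ltnNge; by rewrite leq_addr.
  + move=> h; have := big _ _ _ E1; rewrite -[_.2]/(p.2) h ltnNge; by rewrite leq_addr.
  + move: (memf _ _ _ E1) (memf _ _ _ E2); case: p {E1} => a b; case: p' {E2} => a' b' /=.
    move=> [h1 <-] [h2 <-] hb; apply/eqP; by rewrite (hP _ _ _ _ h1 h2) hb.
- move=> x y hxy; rewrite /rmap.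
  case E: [seq p <- P | p.1 == x] => [|p l].
  + have : (x, y) \in [seq p <- P | p.1 == x] by rewrite mem_filter eqxx.
    by rewrite E.
  + move: (memf _ _ _ E); case: p {E} => a b /= [h ha]; rewrite ha in h.
    by apply/eqP; rewrite -(hP _ _ _ _ h hxy) eqxx.
Qed.

Theorem mainTheorem8 (F : Type) (A : arena F) (sigma : seq (occ A) -> Prop)
  (hA : arena_wf A) (hsigma : strategy sigma)
  (s t : seq (occ A)) (m n : occ A) :
  sigma (rcons s m) -> sigma (rcons t n) -> GR s = GR t ->
  exists r : nat -> nat, injective r /\ rcons s m = rename r (rcons t n).
Proof.
move=> hS hT hGR.
have [_ [hplay [hpre [hdet hren]]]] := hsigma.
have hsz : size s = size t by have := congr1 size hGR; rewrite !size_map.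
set S := rcons s m; set T := rcons t n.
have szS : size S = (size t).+1 by rewrite size_rcons hsz.
have szT : size T = (size t).+1 by rewrite size_rcons.
have hmj i : i < size t ->
    o_mv (nth n S i) = o_mv (nth n T i) /\ o_jp (nth n S i) = o_jp (nth n T i).
  move=> hi; have := congr1 (fun l => nth (o_mv n, o_jp n) l i) hGR.
  rewrite /GR /= !(nth_map n) ?hsz // => -[E1 E2].
  by rewrite /S /T !nth_rcons hsz hi E1 E2.
have [pS _] := hplay _ hS; have [pT _] := hplay _ hT.
have polT := pol hA n pT.
have [jS [iS _]] := pS; have [jT [iT _]] := pT.
have oS i : i < size t -> onth S i = Some (nth n S i).
  by move=> hi; apply: onth_nthS; rewrite szS ltnW.
have oT i : i < size t -> onth T i = Some (nth n T i).
  by move=> hi; apply: onth_nthS; rewrite szT ltnW.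
have ofacts i k : i < size t -> isOm (o_mv (nth n T i)) ->
    k < size (o_inst (nth n T i)) ->
    exists x y, [/\ nth (dterm F) (o_inst (nth n T i)) k = Var (VO x),
      nth (dterm F) (o_inst (nth n S i)) k = Var (VO y),
      k < size (o_inst (nth n S i)) & isOm (o_mv (nth n S i))].
  move=> hi hO hk.
  have [hsT [hOT _]] := iT.1 _ _ (oT _ hi).
  have [hsS [hOS _]] := iS.1 _ _ (oS _ hi).
  have [hm _] := hmj _ hi.
  have hk' : k < size (o_inst (nth n S i)) by rewrite hsS hm -hsT.
  have hO' : isOm (o_mv (nth n S i)) by rewrite hm.
  have [x hx] := hOT hO _ hk; have [y hy] := hOS hO' _ hk'.
  by exists x, y.
set P := pairs n S T (size t).
have hP : forall x y x' y', (x, y) \in P -> (x', y') \in P -> (x == x') = (y == y').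
  move=> x y x' y' /pairsP[i [k [hi hO hk -> ->]]] /pairsP[i' [k' [hi' hO' hk' -> ->]]].
  have [x1 [y1 [ex1 ey1 hk1 hO1]]] := ofacts _ _ hi hO hk.
  have [x2 [y2 [ex2 ey2 hk2 hO2]]] := ofacts _ _ hi' hO' hk'.
  rewrite ex1 ey1 ex2 ey2 /=.
  apply/idP/idP => /eqP E.
  - subst x2.
    have [ei ek] := iT.2 _ _ _ _ _ _ _ (oT _ hi) (oT _ hi') hO hO' hk hk' ex1 ex2.
    by subst i' k'; move: ey1; rewrite ey2 => -[->].
  - subst y2.
    have [ei ek] := iS.2 _ _ _ _ _ _ _ (oS _ hi) (oS _ hi') hO1 hO2 hk1 hk2 ey1 ey2.
    by subst i' k'; move: ex1; rewrite ex2 => -[->].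
have [rinj rP] := rmap_spec hP.
set r := rmap P.
have key i : i < size t -> isOm (o_mv (nth n T i)) ->
    rename_occ r (nth n T i) = nth n S i.
  move=> hi hO.
  have [hm hj] := hmj _ hi.
  have hO' : isOm (o_mv (nth n S i)) by rewrite hm.
  transitivity (Occ (o_mv (nth n S i)) (o_jp (nth n S i)) (o_mu (nth n S i))
                    (o_inst (nth n S i))); last by case: (nth n S i).
  rewrite /rename_occ hm hj; congr Occ.
  - have [_ [szT1 _]] := jT _ _ (oT _ hi).
    have [_ [szS1 _]] := jS _ _ (oS _ hi).
    have [_ [_ [_ [hmuT _]]]] := pT; have [_ [_ [_ [hmuS _]]]] := pS.
    apply: (@eq_from_nth _ None); first by rewrite szT1 szS1 hm.
    by move=> k _; rewrite (hmuT _ _ (oT _ hi) hO) (hmuS _ _ (oS _ hi) hO').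
  - have [hsT _] := iT.1 _ _ (oT _ hi).
    have [hsS _] := iS.1 _ _ (oS _ hi).
    apply: (@eq_from_nth _ (dterm F)); first by rewrite size_map hsT hsS hm.
    rewrite size_map => k hk; rewrite (nth_map (dterm F)) //.
    have [x [y [ex ey _ _]]] := ofacts _ _ hi hO hk.
    rewrite ex ey /rename_term /=.
    have hxy : (x, y) \in P by apply/pairsP; exists i, k; rewrite ex ey.
    by rewrite /r (rP _ _ hxy).
have key2 j : j.*2 <= size S -> take j.*2 S = rename r (take j.*2 T).
  elim: j => [|j IH] hj; first by rewrite double0 !take0.
  rewrite doubleS in hj *.
  have hj1 : j.*2 < size t by rewrite -ltnS -szS.
  have h1 : take j.*2.+1 S = rename r (take j.*2.+1 T).
    have hlt : j.*2 < (size t).+1 by apply: ltnW.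
    rewrite (take_nth n); last by rewrite szS.
    rewrite (take_nth n); last by rewrite szT.
    rewrite IH; last by rewrite szS; apply: ltnW.
    rewrite /rename map_rcons key //.
    by rewrite polT ?size_rcons // odd_double.
  have ev : ~~ odd j.*2.+2 by rewrite -doubleS odd_double.
  have hS2 := hpre _ _ hS ev hj.
  have hlt2 : j.*2.+1 < size (rename r T) by rewrite size_map szT -szS.
  have hT2 := hpre _ _ (hren _ _ rinj hT) ev hlt2.
  rewrite (take_nth n) // in hS2.
  rewrite (take_nth n) // /rename -map_take -/(rename r _) -h1 in hT2.
  have E := hdet _ _ _ hS2 hT2.
  rewrite (take_nth n hj) /rename map_take (take_nth n hlt2) -map_take.
  by rewrite -/(rename r _) -h1 E.
exists r; split=> //.
have [_ ev] := hplay _ hS.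
have hh : (size S)./2.*2 = size S.
  by rewrite -[RHS](odd_double_half (size S)) (negbTE ev).
have := key2 (size S)./2; rewrite hh take_size => ->; last by [].
by rewrite take_oversize // szT -szS.
Qed.
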